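(* Let $(X,d)$ be a metric space and $\ell:X\to[0,+\infty)$ lower semicontinuous with $\inf_X\ell=0$. For $\lambda>0$ let $u_\lambda$ be the Perron solution of $(\mathcal{G}_\lambda)$. Then for every $\alpha>0$, $u_\lambda\to u_\alpha$ pointwise as $\lambda\to\alpha^-$.
   Context: Global slope: $G[u](x)=\sup_{y\neq x}\frac{(u(x)-u(y))_+}{d(x,y)}$ if $u(x)<+\infty$, $G[u](x)=+\infty$ otherwise. A solution of $(\mathcal{G}_\lambda)$ is a lower semicontinuous $u$ with $\inf_Xu=0$ and $\lambda u+G[u]=\ell$ on $X$; the Perron solution is the solution that is pointwise maximal among all solutions (it exists for every $\lambda>0$). *)

(* Defs.v *)
From HB Require Import structures.
From mathcomp Require Import all_boot all_order all_algebra.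
From mathcomp Require Import all_classical all_reals all_analysis.
Set Implicit Arguments. Unset Strict Implicit. Unset Printing Implicit Defensive.
Import Order.TTheory GRing.Theory Num.Theory.
Local Open Scope classical_set_scope.
Local Open Scope ring_scope.

Definition is_metric {R : realType} {X : Type} (d : X -> X -> R) : Prop :=
  (forall x y, 0 <= d x y) /\
  (forall x y, d x y = 0 <-> x = y) /\
  (forall x y, d x y = d y x) /\
  (forall x y z, d x z <= d x y + d y z).

Definition lsc_metric {R : realType} {X : Type} (d : X -> X -> R)
  (f : X -> \bar R) : Prop :=
  forall x (a : \bar R), (a < f x)%E ->
    exists2 delta : R, 0 < delta & forall y, d x y < delta -> (a < f y)%E.

Definition global_slope {R : realType} {X : Type} (d : X -> X -> R)
  (u : X -> \bar R) (x : X) : \bar R :=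
  if (u x < +oo)%E then
    ereal_sup [set (((d x y)^-1)%:E * maxe (u x - u y) 0)%E | y in [set y | y <> x]]
  else +oo%E.

Definition is_solution {R : realType} {X : Type} (d : X -> X -> R)
  (l : X -> R) (lam : R) (u : X -> \bar R) : Prop :=
  lsc_metric d u /\
  ereal_inf (range u) = 0%E /\
  (forall x, (lam%:E * u x + global_slope d u x)%E = (l x)%:E).

Definition is_perron_solution {R : realType} {X : Type} (d : X -> X -> R)
  (l : X -> R) (lam : R) (u : X -> \bar R) : Prop :=
  is_solution d l lam u /\
  (forall v, is_solution d l lam v -> forall x, (v x <= u x)%E).

(* Main.v *)
Require Import Defs.
From HB Require Import structures.
From mathcomp Require Import all_boot all_order all_algebra.
From mathcomp Require Import all_classical all_reals all_analysis.
From mathcomp Require Import lra.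
Import Order.TTheory GRing.Theory Num.Theory.
Local Open Scope classical_set_scope.
Local Open Scope ring_scope.
Set Implicit Arguments. Unset Strict Implicit.

Definition subsol {R : realType} {X : Type} (d : X -> X -> R) (l : X -> R)
  (lam : R) (w : X -> R) : Prop :=
  (forall x, 0 <= w x) /\ (forall x, lam * w x <= l x) /\
  (forall x y, lam * w x * d x y + (w x - w y) <= l x * d x y).

Lemma sol_fin (R : realType) (X : Type) (d : X -> X -> R) (l : X -> R)
  (lam : R) (v : X -> \bar R) :
  0 < lam -> is_solution d l lam v -> forall x,
  v x = (fine (v x))%:E /\ 0 <= fine (v x).
Proof.
move=> lam0 [_ [inf0 eq]] x.
have v0 : (0 <= v x)%E by rewrite -inf0; apply: ereal_inf_lbound; exists x.
move: (eq x); rewrite /global_slope.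
case E: (v x) v0 => [r| |] //= v0.
by rewrite gt0_muley ?lte_fin.
Qed.

Lemma sol_slope (R : realType) (X : Type) (d : X -> X -> R) (l : X -> R)
  (lam : R) (v : X -> \bar R) :
  0 < lam -> is_solution d l lam v -> forall x,
  global_slope d v x = (l x - lam * fine (v x))%:E.
Proof.
move=> lam0 hv x; have [vx _] := sol_fin lam0 hv x.
move: hv => [_ [_ eq]]; move: (eq x); rewrite vx.
case: (global_slope d v x) => [g| |] //=.
by rewrite -EFinM -EFinD => -[<-]; congr (_%:E); lra.
Qed.

Lemma slopeE (R : realType) (X : Type) (d : X -> X -> R) (U : X -> R) x :
  global_slope d (fun y => (U y)%:E) x =
  ereal_sup [set ((d x y)^-1 * Num.max (U x - U y) 0)%:E | y in [set y | y <> x]].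
Proof.
rewrite /global_slope ltry; congr ereal_sup; apply/seteqP; split => _ [y hy <-];
  by exists y => //; rewrite -EFinB -EFin_max -EFinM.
Qed.

Lemma sol_real (R : realType) (X : Type) (d : X -> X -> R) (l : X -> R)
  (lam : R) (v : X -> \bar R) :
  0 < lam -> is_solution d l lam v -> v = (fun y => (fine (v y))%:E).
Proof. by move=> lam0 hv; apply: funext => y; have [] := sol_fin lam0 hv y. Qed.

Lemma sol_sub (R : realType) (X : Type) (d : X -> X -> R) (l : X -> R)
  (lam : R) (v : X -> \bar R) :
  is_metric d -> 0 < lam -> is_solution d l lam v ->
  subsol d l lam (fun y => fine (v y)).
Proof.
move=> [d0 [dxy _]] lam0 hv.
have hs := sol_slope lam0 hv.
have vE := sol_real lam0 hv.
set V := fun y => fine (v y).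
have key : forall x, (exists y, y <> x) /\ forall y, y <> x ->
    (d x y)^-1 * Num.max (V x - V y) 0 <= l x - lam * V x.
  move=> x; have := hs x; rewrite vE slopeE => Hs.
  split.
    apply: contrapT => ne.
    have E0 : ereal_sup [set ((d x y)^-1 * Num.max (V x - V y) 0)%:E | y in [set y | y <> x]] = -oo%E.
      apply/ereal_sup_ninfty => z [y hy _].
      by exfalso; apply: ne; exists y.
    by move: Hs; rewrite E0.
  move=> y hy; rewrite -lee_fin -Hs; apply: ereal_sup_ubound; by exists y.
split; first by move=> x; have [] := sol_fin lam0 hv x.
split.
  move=> x; have [[y hy] H] := key x; have := H y hy.
  have : 0 <= (d x y)^-1 * Num.max (V x - V y) 0.
    by apply: mulr_ge0; [rewrite invr_ge0 | rewrite le_max lexx orbT].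
  move=> h1 h2; have h3 := le_trans h1 h2; by rewrite subr_ge0 in h3.
move=> x y; have [->|hy] := pselect (y = x).
  have -> : d x x = 0 by apply/dxy.
  by rewrite !mulr0 subrr.
have [_ H] := key x; have := H y hy.
have dpos : 0 < d x y.
  by rewrite lt_neqAle d0 andbT; apply/eqP => /esym /dxy /esym.
rewrite ler_pdivrMl // => h.
have h2 : V x - V y <= Num.max (V x - V y) 0 by rewrite le_max lexx.
have h3 := le_trans h2 h; nra.
Qed.

Lemma sub_mono (R : realType) (X : Type) (d : X -> X -> R) (l : X -> R)
  (lam mu : R) (w : X -> R) :
  is_metric d -> 0 <= lam -> lam <= mu -> subsol d l mu w -> subsol d l lam w.
Proof.
move=> [d0 _] l0 lm [w0 [h1 h2]]; split => //; split.
  move=> x; apply: le_trans (h1 x); exact: ler_wpM2r.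
move=> x y; apply: le_trans (h2 x y); rewrite lerD2r.
by apply: ler_wpM2r => //; apply: ler_wpM2r.
Qed.

Definition Wsup (R : realType) (X : Type) (d : X -> X -> R) (l : X -> R)
  (lam : R) (x : X) : R := sup [set w x | w in [set w | subsol d l lam w]].

Lemma W_has (R : realType) (X : Type) (d : X -> X -> R) (l : X -> R)
  (lam : R) x :
  is_metric d -> (forall x, 0 <= l x) -> 0 < lam ->
  has_sup [set w x | w in [set w | subsol d l lam w]].
Proof.
move=> [d0 _] l0 lam0; split.
  exists 0; exists (fun _ => 0) => //; split => // ; split => y; first by rewrite mulr0.
  by move=> z; rewrite mulr0 mul0r subrr add0r; apply: mulr_ge0.
exists (l x / lam) => _ [w [_ [h1 _]] <-].
by rewrite ler_pdivlMr // mulrC.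
Qed.

Lemma le_W (R : realType) (X : Type) (d : X -> X -> R) (l : X -> R)
  (lam : R) w x :
  is_metric d -> (forall x, 0 <= l x) -> 0 < lam ->
  subsol d l lam w -> w x <= Wsup d l lam x.
Proof.
move=> dm l0 lam0 hw; apply: sup_upper_bound; first exact: W_has.
by exists w.
Qed.

Lemma W_sub (R : realType) (X : Type) (d : X -> X -> R) (l : X -> R)
  (lam : R) :
  is_metric d -> (forall x, 0 <= l x) -> 0 < lam ->
  subsol d l lam (Wsup d l lam).
Proof.
move=> dm l0 lam0; have [d0 _] := dm.
have w0 : subsol d l lam (fun _ => 0).
  split => // ; split => y; first by rewrite mulr0.
  by move=> z; rewrite mulr0 mul0r subrr add0r; apply: mulr_ge0.
split; first by move=> x; apply: le_trans (le_W x dm l0 lam0 w0).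
split.
  move=> x; rewrite mulrC -ler_pdivlMr //; apply: ge_sup.
    by exists 0; exists (fun _ => 0).
  move=> _ [w [_ [h1 _]] <-]; by rewrite ler_pdivlMr // mulrC.
move=> x y.
have pos : 0 < lam * d x y + 1 by have := d0 x y; nra.
suff : Wsup d l lam x <= (l x * d x y + Wsup d l lam y) / (lam * d x y + 1).
  by rewrite ler_pdivlMr //; lra.
apply: ge_sup; first by exists 0; exists (fun _ => 0).
move=> _ [w hw <-]; rewrite ler_pdivlMr //.
have := le_W y dm l0 lam0 hw; have [_ [_ h2]] := hw; have := h2 x y; lra.
Qed.

Lemma bump (R : realType) (X : Type) (d : X -> X -> R) (l : X -> R)
  (lam : R) (W : X -> R) x0 g :
  is_metric d -> 0 < lam -> lsc_metric d (fun x => (l x)%:E) ->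
  subsol d l lam W -> 0 <= g -> lam * W x0 + g < l x0 ->
  (forall y, W x0 - W y <= g * d x0 y) ->
  exists2 w, subsol d l lam w & W x0 < w x0.
Proof.
move=> [d0 [dxy [_ tri]]] lam0 lsc [W0 [W1 W2]] g0 hlt hg.
set del := l x0 - lam * W x0 - g.
have del0 : 0 < del by rewrite /del; lra.
have [r r0 hr] := lsc x0 (l x0 - del / 4)%:E
  (ltac:(rewrite lte_fin; lra)).
set K := g + del / 2.
set eps := Num.min (del / (4 * lam)) (r * del / 4).
have eps0 : 0 < eps by rewrite lt_min; apply/andP; split;
  [apply: divr_gt0 => //; apply: mulr_gt0 | apply: divr_gt0 => //; apply: mulr_gt0].
have eps1 : lam * eps <= del / 4.
  have : eps <= del / (4 * lam) by rewrite ge_min lexx.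
  rewrite ler_pdivlMr ?mulr_gt0 //; lra.
have eps2 : eps <= r * del / 4 by rewrite ge_min lexx orbT.
set phi := fun y => W x0 + eps - K * d x0 y.
have dx00 : d x0 x0 = 0 by apply/dxy.
exists (fun y => Num.max (W y) (phi y)); last first.
  rewrite /= /phi dx00 mulr0 subr0 lt_max; apply/orP; right; lra.
split; first by move=> x; rewrite le_max W0.
have case2 : forall x, W x < phi x -> lam * phi x + K <= l x.
  move=> x hx.
  have h1 := hg x.
  have hd : del / 2 * d x0 x < eps by rewrite /phi /K in hx; lra.
  have hd2 : d x0 x < r.
    have : del / 2 * d x0 x < del / 2 * r.
      by apply: lt_le_trans hd _; lra.
    by rewrite ltr_pM2l //; lra.
  have := hr x hd2; rewrite lte_fin => hl.
  have hphi : phi x <= W x0 + eps.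
    rewrite /phi; have := d0 x0 x; have : 0 <= K by rewrite /K; lra.
    move=> K0 dd; have : 0 <= K * d x0 x by apply: mulr_ge0.
    lra.
  have : lam * phi x <= lam * (W x0 + eps) by apply: ler_wpM2l => //; lra.
  have hdel : del = l x0 - lam * W x0 - g by [].
  have hK : K = g + del / 2 by [].
  rewrite mulrDr; lra.
have K0 : 0 <= K by rewrite /K; lra.
split.
  move=> x /=; have [hx|hx] := lerP (phi x) (W x).
    exact: W1.
  have := case2 x hx; lra.
move=> x y /=; have [hx|hx] := lerP (phi x) (W x).
  have : W y <= Num.max (W y) (phi y) by rewrite le_max lexx.
  have := W2 x y; lra.
have h1 : phi y <= Num.max (W y) (phi y) by rewrite le_max lexx orbT.
have h2 : phi x - phi y <= K * d x y.
  rewrite /phi; have := tri x0 x y.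
  have := ler_wpM2l K0 (tri x0 x y); rewrite mulrDr; lra.
have h3 := case2 x hx.
have h4 : (lam * phi x + K) * d x y <= l x * d x y.
  by apply: ler_wpM2r.
rewrite mulrDl in h4; lra.
Qed.

Lemma W_sol (R : realType) (X : Type) (d : X -> X -> R) (l : X -> R)
  (lam : R) :
  is_metric d -> (forall x, 0 <= l x) -> 0 < lam ->
  lsc_metric d (fun x => (l x)%:E) ->
  ereal_inf (range (fun x => (l x)%:E)) = 0%E ->
  (forall x, exists y : X, y <> x) ->
  is_solution d l lam (fun x => (Wsup d l lam x)%:E).
Proof.
move=> dm l0 lam0 lsc linf ne.
have dm' := dm; move: dm' => [d0 [dxy [_ tri]]].
have hW := W_sub dm l0 lam0.
move: hW; set W := Wsup d l lam => hW.
have [W0 [W1 W2]] := hW.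
have lowW : forall x y, W x - l x * d x y <= W y.
  move=> x y; have := W2 x y; have : 0 <= lam * W x * d x y.
    by apply: mulr_ge0 => //; apply: mulr_ge0 => //; exact: ltW.
  lra.
split.
  move=> x [r| |] //= ha.
    exists ((W x - r) / (l x + 1)).
      by apply: divr_gt0; [rewrite lte_fin in ha; lra | have := l0 x; lra].
    move=> y hy; rewrite lte_fin; rewrite lte_fin in ha.
    have l1 : 0 < l x + 1 by have := l0 x; lra.
    rewrite ltr_pdivlMr // in hy.
    have := lowW x y; have := d0 x y; have := l0 x; nra.
  by exists 1 => // y _; rewrite ltNyr.
split.
  apply/le_anti/andP; split.
    apply/lee_addgt0Pr => e e0; rewrite add0e.
    have : (ereal_inf (range (fun x => (l x)%:E)) < (lam * e)%:E)%E.
      by rewrite linf lte_fin mulr_gt0.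
    move=> /ereal_inf_lt [_ [x _ <-]]; rewrite lte_fin => hx.
    apply: ge_ereal_inf; exists (W x)%:E; first by exists x.
    rewrite lee_fin; have := W1 x; nra.
  by apply: le_ereal_inf_tmp => _ [x _ <-]; rewrite lee_fin.
move=> x; rewrite slopeE.
suff -> : ereal_sup [set ((d x y)^-1 * Num.max (W x - W y) 0)%:E | y in [set y | y <> x]]
   = (l x - lam * W x)%:E.
  by rewrite -EFinM -EFinD; congr (_%:E); lra.
have dpos : forall y, y <> x -> 0 < d x y.
  by move=> y hy; rewrite lt_neqAle d0 andbT; apply/eqP => /esym /dxy /esym.
apply/le_anti/andP; split.
  apply: ge_ereal_sup => _ [y hy <-]; rewrite lee_fin.
  rewrite ler_pdivrMl ?dpos // ge_max; apply/andP; split.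
    have := W2 x y; lra.
  by apply: mulr_ge0; [exact: d0 | have := W1 x; lra].
rewrite leNgt; apply/negP => hlt.
have [y0 hy0] := ne x.
have ge0 : (0 <= ereal_sup [set ((d x y)^-1 * Num.max (W x - W y) 0)%:E | y in [set y | y <> x]])%E.
  apply: le_ereal_sup_tmp; exists ((d x y0)^-1 * Num.max (W x - W y0) 0)%:E.
    by exists y0.
  rewrite lee_fin; apply: mulr_ge0; first by rewrite invr_ge0.
  by rewrite le_max lexx orbT.
move: ge0 hlt.
case E: (ereal_sup _) => [g| |] //= g0 hlt.
rewrite lee_fin in g0; rewrite lte_fin in hlt.
have hg : forall y, W x - W y <= g * d x y.
  move=> y; have [->|hy] := pselect (y = x).
    by rewrite subrr; apply: mulr_ge0.
  have : (((d x y)^-1 * Num.max (W x - W y) 0)%:E <= g%:E)%E.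
    by rewrite -E; apply: ereal_sup_ubound; exists y.
  rewrite lee_fin ler_pdivrMl ?dpos // => h.
  have h2 : W x - W y <= Num.max (W x - W y) 0 by rewrite le_max lexx.
  have := le_trans h2 h; by rewrite mulrC.
have [w hw hwx] := bump dm lam0 lsc hW g0 (ltac:(lra)) hg.
have := le_W x dm l0 lam0 hw; rewrite -/W; lra.
Qed.

Lemma sol_ne (R : realType) (X : Type) (d : X -> X -> R) (l : X -> R)
  (lam : R) (v : X -> \bar R) :
  0 < lam -> is_solution d l lam v -> forall x, exists y : X, y <> x.
Proof.
move=> lam0 hv x; have := sol_slope lam0 hv x; rewrite (sol_real lam0 hv) slopeE.
apply: contraPP => ne.
have -> : ereal_sup [set ((d x y)^-1 * Num.max (fine (v x) - fine (v y)) 0)%:E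
     | y in [set y | y <> x]] = -oo%E.
  apply/ereal_sup_ninfty => z [y hy _].
  by exfalso; apply: ne; exists y.
by [].
Qed.

Lemma approx (R : realType) (a b c : R) :
  0 <= c -> (forall e, 0 < e -> a <= b + e * c) -> a <= b.
Proof.
move=> c0 h; apply/ler_addgt0Pr => e e0.
have c1 : 0 < c + 1 by lra.
have := h (e / (c + 1)) (divr_gt0 e0 c1).
have : e / (c + 1) * c <= e.
  rewrite mulrAC ler_pdivrMr //; nra.
lra.
Qed.

Unset Implicit Arguments.

Theorem proposition5p8 (R : realType) (X : Type) (d : X -> X -> R)
  (l : X -> R) (u : R -> X -> \bar R) :
  is_metric d ->
  (forall x, 0 <= l x) ->
  lsc_metric d (fun x => (l x)%:E) ->
  ereal_inf (range (fun x => (l x)%:E)) = 0%E ->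
  (forall lam, 0 < lam -> is_perron_solution d l lam (u lam)) ->
  forall alpha, 0 < alpha -> forall x,
    (fun lam => u lam x) @ alpha^'- --> u alpha x.
Proof.
move=> dm l0 lsc linf hu alpha a0 x.
have [d0 _] := dm.
have hne := sol_ne a0 (hu alpha a0).1.
pose U lam y := fine (u lam y).
have Ksub : forall lam, 0 < lam -> forall w, subsol d l lam w -> forall y, w y <= U lam y.
  move=> lam lam0 w hw y; have h1 := le_W y dm l0 lam0 hw.
  have h2 := (hu lam lam0).2 _ (W_sol dm l0 lam0 lsc linf hne) y.
  have [h3 _] := sol_fin lam0 (hu lam lam0).1 y.
  rewrite h3 lee_fin in h2; exact: le_trans h1 h2.
have Usub : forall lam, 0 < lam -> subsol d l lam (U lam).
  by move=> lam lam0; exact: sol_sub dm lam0 (hu lam lam0).1.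
have mono : forall lam mu, 0 < lam -> lam <= mu -> forall y, U mu y <= U lam y.
  move=> lam mu lam0 lm; apply: Ksub => //.
  apply: sub_mono dm (ltW lam0) lm (Usub mu (lt_le_trans lam0 lm)).
pose I := [set lam | 0 < lam < alpha].
pose V y := inf [set U lam y | lam in I].
have Ine : forall y, [set U lam y | lam in I] !=set0.
  move=> y; exists (U (alpha / 2) y); exists (alpha / 2) => //.
  rewrite /I /=; apply/andP; split; lra.
have Ilb : forall y, has_lbound [set U lam y | lam in I].
  move=> y; exists 0 => _ [lam /andP [lam0 _] <-]; by have [] := Usub lam lam0.
have V0 : forall y, 0 <= V y.
  move=> y; apply: lb_le_inf => // _ [lam /andP [lam0 _] <-]; by have [] := Usub lam lam0.
have VU : forall y lam, 0 < lam < alpha -> V y <= U lam y.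
  move=> y lam hl; apply: ge_inf => //; by exists lam.
have VA : forall y e, 0 < e -> exists lam, [/\ 0 < lam, lam < alpha, alpha - e <= lam &
    U lam y <= V y + e].
  move=> y e e0.
  have : V y < V y + e by lra.
  move=> /(inf_lt (Ine y)) [_ [lam0 /andP [l00 l0a] <-]] hl.
  exists (Num.max lam0 (alpha - e)); split.
  - by rewrite lt_max l00.
  - by rewrite gt_max l0a /=; lra.
  - by rewrite le_max lexx orbT.
  - apply: le_trans (ltW hl); apply: mono => //; by rewrite le_max lexx.
have Vsub : subsol d l alpha V.
  split => //; split.
    move=> y; apply: (approx (V0 y)) => e e0.
    have [lam [lam0 la lae _]] := VA y e e0.
    have [_ [h1 _]] := Usub lam lam0.
    have := h1 y; have := VU y lam (ltac:(apply/andP; split => //)).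
    have := V0 y; nra.
  move=> y z; apply: (approx (c := 1 + V y * d y z)).
    by have := V0 y; have := d0 y z; nra.
  move=> e e0.
  have [lam [lam0 la lae hz]] := VA z e e0.
  have [_ [_ h2]] := Usub lam lam0.
  have := h2 y z; have := VU y lam (ltac:(apply/andP; split => //)).
  have := V0 y; have := d0 y z; have := V0 z.
  move=> v0z dyz v0y vu h.
  have s1 : 0 <= (lam + e - alpha) * (V y * d y z).
    by apply: mulr_ge0; [lra | apply: mulr_ge0].
  have s2 : 0 <= (U lam y - V y) * (lam * d y z).
    by apply: mulr_ge0; [lra | apply: mulr_ge0 => //; exact: ltW].
  nra.
have VUa : V x <= U alpha x by apply: Ksub.
have key : forall e, 0 < e -> exists lam1, [/\ 0 < lam1, lam1 < alpha &
    U lam1 x <= U alpha x + e].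
  move=> e e0; have [lam [lam0 la _ h]] := VA x e e0.
  by exists lam; split => //; lra.
have -> : u alpha x = (U alpha x)%:E by have [] := sol_fin a0 (hu alpha a0).1 x.
apply: cvg_EFin.
  apply: filterS (nbhs_left_gt a0) => t t0.
  by have [-> _] := sol_fin t0 (hu t t0).1 x.
apply/cvgrPdist_le => e e0.
have [lam1 [l10 l1a hl1]] := key e e0.
near=> t.
have t1 : lam1 < t by near: t; exact: nbhs_left_gt.
have ta : t < alpha by near: t; exact: nbhs_left_lt.
have h1 : U alpha x <= U t x by apply: mono; lra.
have h2 : U t x <= U lam1 x by apply: mono; lra.
rewrite /= -/(U t x) ler_norml; apply/andP; split; lra.
Unshelve. all: by end_near.
Qed.
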